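(* Let $n,g,k$ be integers with $1\leq g\leq \left\lfloor \frac{n-k-2}{2}\right\rfloor$. Let $G^k_n$ be the graph obtained from three disjoint cliques $K_{n-k-g}$, $K_{k-1}$, $K_{g+1}$ by adding all edges between $V(K_{n-k-g})$ and $V(K_{k-1})$ and all edges between $V(K_{g+1})$ and $V(K_{k-1})$. Then $\kappa^g(G^k_n)=k-1$.
   Context: For a connected graph $G=(V,E)$ and integer $g\ge0$: a set $F\subseteq V$ is a $g$-good-neighbor faulty set if $|N(v)\cap (V-F)|\geq g$ for every $v\in V-F$; a $g$-good-neighbor cut is such an $F$ with $G-F$ disconnected; $\kappa^g(G)$ is the minimum cardinality of a $g$-good-neighbor cut. *)

(* Defs.v *)
From mathcomp Require Import all_boot.
Set Implicit Arguments. Unset Strict Implicit. Unset Printing Implicit Defensive.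

(* A simple graph on a finite vertex type T is given by an adjacency relation e
   (assumed symmetric and irreflexive where relevant). *)

Definition nbhd (T : finType) (e : rel T) (v : T) : {set T} := [set u | e v u].

Definition good_neighbor_faulty (T : finType) (e : rel T) (g : nat) (F : {set T}) :=
  forall v : T, v \in ~: F -> g <= #|nbhd e v :&: ~: F|.

Definition del_rel (T : finType) (e : rel T) (F : {set T}) : rel T :=
  [rel x y | [&& e x y, x \notin F & y \notin F]].

Definition disconnected_after (T : finType) (e : rel T) (F : {set T}) :=
  exists u v : T, [/\ u \notin F, v \notin F & ~~ connect (del_rel e F) u v].

Definition good_neighbor_cut (T : finType) (e : rel T) (g : nat) (F : {set T}) :=
  good_neighbor_faulty e g F /\ disconnected_after e F.

Definition kappa_g_eq (T : finType) (e : rel T) (g m : nat) :=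
  (exists F : {set T}, good_neighbor_cut e g F /\ #|F| = m) /\
  (forall F : {set T}, good_neighbor_cut e g F -> m <= #|F|).

(* The graph G^k_n: vertices of K_{n-k-g} (inl (inl _)), K_{k-1} (inl (inr _)),
   K_{g+1} (inr _). *)
Definition Gvert (n k g : nat) : finType :=
  ('I_(n - k - g) + 'I_(k - 1) + 'I_(g + 1))%type.

Definition blk (n k g : nat) (x : Gvert n k g) : nat :=
  match x with inl (inl _) => 0 | inl (inr _) => 1 | inr _ => 2 end.

Definition Gedge (n k g : nat) : rel (Gvert n k g) :=
  fun x y => (x != y) &&
    ((blk x == blk y) || (blk x == 1) || (blk y == 1)).

(* Main.v *)
Require Import Defs.
From mathcomp Require Import all_boot.
From mathcomp Require Import zify.

Section Aux.
Variables n k g : nat.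
Local Notation V := (Gvert n k g).
Local Notation e := (@Gedge n k g).

Definition SB : {set V} := [set (inl (inr i) : V) | i : 'I_(k - 1)].
Definition SA : {set V} := [set (inl (inl i) : V) | i : 'I_(n - k - g)].
Definition SC : {set V} := [set (inr i : V) | i : 'I_(g + 1)].

Lemma memSB (x : V) : (x \in SB) = (blk x == 1).
Proof.
apply/imsetP/idP.
  by case=> i _ ->.
by case: x => [[a|b]|c] //= _; exists b.
Qed.
Lemma memSA (x : V) : (x \in SA) = (blk x == 0).
Proof.
apply/imsetP/idP.
  by case=> i _ ->.
by case: x => [[a|b]|c] //= _; exists a.
Qed.
Lemma memSC (x : V) : (x \in SC) = (blk x == 2).
Proof.
apply/imsetP/idP.
  by case=> i _ ->.
by case: x => [[a|b]|c] //= _; exists c.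
Qed.

Lemma cardSB : #|SB| = k - 1.
Proof. rewrite card_imset ?card_ord //; by move=> i j [] . Qed.
Lemma cardSA : #|SA| = n - k - g.
Proof. rewrite card_imset ?card_ord //; by move=> i j [] . Qed.
Lemma cardSC : #|SC| = g + 1.
Proof. rewrite card_imset ?card_ord //; by move=> i j [] . Qed.

Lemma gn_block (S : {set V}) (v : V) :
  (forall x, x \in S = (blk x == blk v)) -> blk v != 1 ->
  #|S| - 1 <= #|nbhd e v :&: ~: SB|.
Proof.
move=> HS Hv.
have vS : v \in S by rewrite HS.
rewrite (cardsD1 v S) vS add1n subn1 /=.
apply: subset_leq_card; apply/subsetP => x.
rewrite !inE HS memSB => /andP [xv /eqP bx].
rewrite bx Hv andbT /Gedge eq_sym xv /=.
by rewrite bx eqxx.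
Qed.

End Aux.

Theorem lemma4p4 (n k g : nat) :
  1 <= k -> 1 <= g -> g <= (n - k - 2) %/ 2 ->
  kappa_g_eq (@Gedge n k g) g (k - 1).
Proof.
move=> Hk Hg Hn.
have HA : g + 2 <= n - k - g by lia.
split.
  exists (SB n k g); split; last exact: cardSB.
  split.
    move=> v; rewrite inE memSB => Hv.
    case: v Hv => [[a|b]|c] //= _.
      have := @gn_block n k g (SA n k g) (inl (inl a)).
      rewrite cardSA => H; apply: leq_trans (H _ _) => //; first by lia.
      by move=> x; rewrite memSA.
    have := @gn_block n k g (SC n k g) (inr c).
    rewrite cardSC => H; apply: leq_trans (H _ _) => //; first by lia.
    by move=> x; rewrite memSC.
  have a0 : 0 < n - k - g by lia.
  have c0 : 0 < g + 1 by lia.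
  exists (inl (inl (Ordinal a0))), (inr (Ordinal c0)).
  split; rewrite ?memSB //.
  apply/negP => Hc.
  have Hcl : closed (del_rel (@Gedge n k g) (SB n k g)) (fun x => blk x == 0).
    move=> x y /and3P [Hxy Hx Hy].
    rewrite memSB in Hx; rewrite memSB in Hy.
    move: Hxy; rewrite /Gedge => /andP [_].
    rewrite (negbTE Hx) (negbTE Hy) !orbF => /eqP Hb.
    by rewrite /in_mem /= Hb.
  by have := closed_connect Hcl Hc.
move=> F [_ [u [v [Hu Hv Hc]]]].
rewrite -(cardSB n k g).
apply: subset_leq_card; apply/subsetP => b Hb.
apply/negPn/negP => Hbf.
move: Hc; apply/negP/negPn.
rewrite memSB in Hb.
have Hto : forall w, w \notin F -> connect (del_rel (@Gedge n k g) F) w b.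
  move=> w Hw; case: (eqVneq w b) => [->|wb]; first exact: connect0.
  apply: connect1; rewrite /del_rel /= Hw Hbf /Gedge wb Hb /=.
  by rewrite !orbT.
have Hfrom : forall w, w \notin F -> connect (del_rel (@Gedge n k g) F) b w.
  move=> w Hw; case: (eqVneq w b) => [->|wb]; first exact: connect0.
  apply: connect1; rewrite /del_rel /= Hw Hbf /Gedge eq_sym wb Hb /=.
  by rewrite !orbT.
exact: connect_trans (Hto _ Hu) (Hfrom _ Hv).
Qed.
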